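(* Let $G$ be a finite undirected graph and $\tau\ge1$ an integer. Run the following procedure. Maintain a current graph $H$, initially $H=G$, and a stored value $s(e)$ for each edge, initially $s(e)=\mathrm{sup}_\tau(e,G)$ for every $e\in E(G)$. While $H$ has at least one edge: set $k:=\min_{e\in E(H)} s(e)+2$; then, while there exists an edge $e=(u,v)\in E(H)$ with $s(e)\le k-2$, pick any such edge, assign $\phi(e):=k$, let $H_{\mathrm{old}}:=H$, delete the edge $e$ from $H$, and for every edge $e'=(u',v')\in E(H)$ with $u',v'\in\{u\}\cup\{v\}\cup\Delta_\tau(e,H_{\mathrm{old}})$ and $s(e')>k-2$, reset $s(e'):=\mathrm{sup}_\tau(e',H)$. Then, when the procedure terminates, every edge $e\in E(G)$ has been assigned exactly once and $\phi(e)=\phi_\tau(e,G)$, regardless of the choices made.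
   Context: Graphs are finite, simple, undirected and unweighted; paths may repeat vertices and their length is the number of edges. For vertices $v,u$ of a graph $H$, $u$ is $\tau$-hop reachable from $v$ in $H$ if there is a path between them in $H$ of length at most $\tau$. $N_\tau(v,H)$ is the set of vertices $u\ne v$ that are $\tau$-hop reachable from $v$ in $H$. For an edge $e=(u,v)$ of $H$, $\Delta_\tau(e,H)=N_\tau(u,H)\cap N_\tau(v,H)$ and $\mathrm{sup}_\tau(e,H)=|\Delta_\tau(e,H)|$. The $(k,\tau)$-truss of $G$ is the maximal subgraph $G'$ of $G$ such that $\mathrm{sup}_\tau(e,G')\ge k-2$ for every edge $e\in E(G')$ (supports computed inside $G'$) and no more edges of $G$ can be added while keeping this property; a subgraph is determined by its edge set. The higher-order truss number $\phi_\tau(e,G)$ of an edge $e$ is the maximum $k$ such that $e$ belongs to the $(k,\tau)$-truss of $G$. *)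

(* Defs.v *)
(* A graph on a finite vertex type T is given by its edge set
   E : {set {set T}}, each edge being a 2-element set of vertices; a subgraph
   is determined by its edge set F \subset E. *)
From mathcomp Require Import all_boot.
Set Implicit Arguments.
Unset Strict Implicit.
Unset Printing Implicit Defensive.

Section HigherOrderTruss.
Variable T : finType.

Definition adj (E : {set {set T}}) : rel T := fun x y => [set x; y] \in E.

Definition reachb (E : {set {set T}}) (tau : nat) (v u : T) : bool :=
  [exists n : 'I_tau.+1, exists p : n.-tuple T,
     path (adj E) v p && (last v p == u)].

Definition Nt (tau : nat) (E : {set {set T}}) (v : T) : {set T} :=
  [set u | (u != v) && reachb E tau v u].

(* Delta_tau(e, H) = N_tau(u,H) :&: N_tau(v,H) for e = {u, v} *)
Definition Delta (tau : nat) (E : {set {set T}}) (e : {set T}) : {set T} :=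
  [set w | [forall x in e, w \in Nt tau E x]].

Definition sup (tau : nat) (E : {set {set T}}) (e : {set T}) : nat :=
  #|Delta tau E e|.

Definition truss_valid (tau k : nat) (F : {set {set T}}) : Prop :=
  forall e, e \in F -> k - 2 <= sup tau F e.

Definition is_truss (tau k : nat) (E F : {set {set T}}) : Prop :=
  [/\ F \subset E, truss_valid tau k F &
      forall F' : {set {set T}}, F \subset F' -> F' \subset E -> truss_valid tau k F' -> F' = F].

Definition in_truss (tau k : nat) (E : {set {set T}}) (e : {set T}) : Prop :=
  exists F, is_truss tau k E F /\ e \in F.

Definition is_truss_number (tau : nat) (E : {set {set T}}) (e : {set T})
    (k : nat) : Prop :=
  in_truss tau k E e /\ forall k', in_truss tau k' E e -> k' <= k.

(* State of the procedure: current graph H, stored values s, the log of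
   assignments phi(e) := k (in order), and the phase: None = at the test of
   the outer while loop, Some k = inside the inner loop with current k. *)
Record state := State {
  st_H : {set {set T}};
  st_s : {set T} -> nat;
  st_log : seq ({set T} * nat);
  st_k : option nat }.

(* the reset of stored values after deleting e from H (H is H_old) *)
Definition reset (tau k : nat) (e : {set T}) (H : {set {set T}})
    (s : {set T} -> nat) : {set T} -> nat :=
  fun e' => if [&& e' \in H :\ e, e' \subset e :|: Delta tau H e & k - 2 < s e']
            then sup tau (H :\ e) e' else s e'.

Inductive step (tau : nat) : state -> state -> Prop :=
| step_outer (H : {set {set T}}) (s : {set T} -> nat) log m :
    H != set0 ->
    (exists2 e, e \in H & s e = m) ->
    (forall e, e \in H -> m <= s e) ->
    step tau (State H s log None) (State H s log (Some (m + 2)))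
| step_pick (H : {set {set T}}) (s : {set T} -> nat) log k (e : {set T}) :
    e \in H -> s e <= k - 2 ->
    step tau (State H s log (Some k))
             (State (H :\ e) (reset tau k e H s) (rcons log (e, k)) (Some k))
| step_exit (H : {set {set T}}) (s : {set T} -> nat) log k :
    (forall e, e \in H -> k - 2 < s e) ->
    step tau (State H s log (Some k)) (State H s log None).

Inductive steps (tau : nat) : state -> state -> Prop :=
| steps_refl st : steps tau st st
| steps_cons st1 st2 st3 : step tau st1 st2 -> steps tau st2 st3 -> steps tau st1 st3.

End HigherOrderTruss.

(* Main.v *)
Require Import Defs.
From mathcomp Require Import all_boot zify.
From Stdlib Require Import Classical.
Set Implicit Arguments. Unset Strict Implicit. Unset Printing Implicit Defensive.

Definition reachP {T : finType} (E : {set {set T}}) (n : nat) (x y : T) :=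
  exists p : seq T, [/\ size p <= n, path (adj E) x p & last x p = y].

Lemma reachbP {T : finType} (E : {set {set T}}) tau x y :
  reachb E tau x y <-> reachP E tau x y.
Proof.
split.
  case/existsP=> n /existsP [p /andP [Hp /eqP Hl]].
  by exists p; split=> //; rewrite size_tuple -ltnS ltn_ord.
case=> p [Hs Hp Hl]; apply/existsP.
have Hs' : size p < tau.+1 by [].
exists (Ordinal Hs'); apply/existsP; exists (in_tuple p) => /=.
by rewrite Hp Hl eqxx.
Qed.

Lemma adjC {T : finType} (E : {set {set T}}) x y : adj E x y = adj E y x.
Proof. by rewrite /adj setUC. Qed.

Lemma reach0 {T : finType} (E : {set {set T}}) n x : reachP E n x x.
Proof. by exists [::]. Qed.

Lemma reach0E {T : finType} (E : {set {set T}}) x y : reachP E 0 x y -> x = y.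
Proof. by case=> [[|a p]] [] //= _ _ ->. Qed.

Lemma reach_le {T : finType} (E : {set {set T}}) n m x y :
  n <= m -> reachP E n x y -> reachP E m x y.
Proof. move=> Hnm [p [Hs Hp Hl]]; exists p; split=> //; exact: leq_trans Hnm. Qed.

Lemma reach_cat {T : finType} (E : {set {set T}}) n1 n2 x y z :
  reachP E n1 x y -> reachP E n2 y z -> reachP E (n1 + n2) x z.
Proof.
move=> [p [Hs Hp Hl]] [q [Hs' Hq Hl']]; exists (p ++ q); split.
- by rewrite size_cat leq_add.
- by rewrite cat_path Hp Hl Hq.
- by rewrite last_cat Hl.
Qed.

Lemma reach_adj {T : finType} (E : {set {set T}}) x y : adj E x y -> reachP E 1 x y.
Proof. by move=> H; exists [:: y]; rewrite /= H. Qed.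

Lemma reach_sym {T : finType} (E : {set {set T}}) n x y : reachP E n x y -> reachP E n y x.
Proof.
case=> p [Hs Hp Hl]; exists (rev (belast x p)); split.
- by rewrite size_rev size_belast.
- rewrite -Hl rev_path; apply: sub_path Hp => a b /=; by rewrite adjC.
- by case: p Hs Hp Hl => [|a p] //= _ _ <-; rewrite rev_cons last_rcons.
Qed.

Lemma reach_mono {T : finType} (E1 E2 : {set {set T}}) n x y :
  E1 \subset E2 -> reachP E1 n x y -> reachP E2 n x y.
Proof.
move=> HE [p [Hs Hp Hl]]; exists p; split=> //.
by apply: sub_path Hp => a b; rewrite /adj => /(subsetP HE).
Qed.

Lemma reach_split {T : finType} (H : {set {set T}}) (e : {set T}) n x w :
  reachP H n x w -> ~ reachP (H :\ e) n x w ->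
  exists a b L1 L2, [/\ L1 + 1 + L2 <= n, reachP H L1 x a, [set a; b] = e,
                     adj H a b & reachP H L2 b w].
Proof.
case=> p [Hs Hp Hl]; elim: p n x Hs Hp Hl => [|y p IH] n x Hs Hp Hl Hn.
  by exfalso; apply: Hn; rewrite -Hl; apply: reach0.
move: Hp => /= /andP [Hxy Hp].
have [Exy|Nxy] := eqVneq [set x; y] e.
  exists x; exists y; exists 0; exists (size p).
  split; [by move: Hs => /=; lia | exact: reach0 | done | done | by exists p].
case: n Hs Hn => [//|n] /= Hs Hn.
have Hn' : ~ reachP (H :\ e) n y w.
  move=> Hr; apply: Hn.
  have -> : n.+1 = 1 + n by [].
  apply: reach_cat Hr; apply: reach_adj.
  by rewrite /adj in_setD1 Nxy.
have [a [b [L1 [L2 [HL Ha Hab Hadj Hb]]]]] := IH n y Hs Hp Hl Hn'.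
exists a; exists b; exists L1.+1; exists L2; split; [lia | | done | done | done].
have -> : L1.+1 = 1 + L1 by [].
by apply: reach_cat Ha; apply: reach_adj.
Qed.

Lemma reachb_mono {T : finType} (E1 E2 : {set {set T}}) tau x y :
  E1 \subset E2 -> reachb E1 tau x y -> reachb E2 tau x y.
Proof. by move=> HE /reachbP H; apply/reachbP; apply: reach_mono H. Qed.

Lemma Delta_mono {T : finType} (E1 E2 : {set {set T}}) tau e :
  E1 \subset E2 -> Delta tau E1 e \subset Delta tau E2 e.
Proof.
move=> HE; apply/subsetP=> w; rewrite !inE => /forall_inP H.
apply/forall_inP=> x /H; rewrite !inE => /andP [-> /=].
exact: reachb_mono.
Qed.

Lemma sup_mono {T : finType} (E1 E2 : {set {set T}}) tau e :
  E1 \subset E2 -> sup tau E1 e <= sup tau E2 e.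
Proof. by move=> HE; apply: subset_leq_card; apply: Delta_mono. Qed.

Lemma inNt {T : finType} (E : {set {set T}}) tau x w :
  (w \in Nt tau E x) = (w != x) && reachb E tau x w.
Proof. by rewrite inE. Qed.

Lemma in_region {T : finType} (H : {set {set T}}) tau a b z :
  reachP H tau a z -> reachP H tau b z ->
  z \in [set a; b] :|: Delta tau H [set a; b].
Proof.
move=> Ha Hb; rewrite in_setU; case: (boolP (z \in [set a; b])) => //= Hz.
rewrite inE; apply/forall_inP=> x; rewrite !inE => /orP [] /eqP ->;
  apply/andP; split.
- by apply: contra Hz => /eqP ->; rewrite !inE eqxx.
- by apply/reachbP.
- by apply: contra Hz => /eqP ->; rewrite !inE eqxx orbT.
- by apply/reachbP.
Qed.

Lemma locality {T : finType} (H : {set {set T}}) tau (e f : {set T}) :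
  f \in H -> #|f| = 2 ->
  ~~ (f \subset e :|: Delta tau H e) ->
  sup tau (H :\ e) f = sup tau H f.
Proof.
move=> fH /eqP /cards2P [x [y [xy fE]]] Nreg.
apply/eqP; rewrite eqn_leq sup_mono ?subsetDl //=.
apply: subset_leq_card; apply/subsetP=> w Hw.
case: (boolP (w \in Delta tau (H :\ e) f)) => // Hw'; exfalso; move/negP: Nreg; apply.
have [z [z' [zf fE' Hz]]] : exists z z', [/\ z \in f, f = [set z; z'] &
    ~ reachP (H :\ e) tau z w /\ reachP H tau z w /\ reachP H tau z' w].
  move: Hw Hw'; rewrite !inE => /forall_inP Hw Hw'.
  have [z zf Nz] : exists2 z, z \in f & w \notin Nt tau (H :\ e) z.
    apply/exists_inP; apply: contraR Hw'; rewrite negb_exists_in => /forall_inP K.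
    by apply/forall_inP => z /K /negPn.
  have := Hw z zf; rewrite !inNt => /andP [wz Hr].
  move: Nz; rewrite inNt wz /= => Nz.
  have [z' fz] : exists z', f = [set z; z'].
    move: zf; rewrite fE !inE => /orP [] /eqP ->; first by exists y.
    by exists x; rewrite setUC.
  exists z, z'; split=> //; split; first by move/reachbP; apply/negP.
  split; first by apply/reachbP.
  have := Hw z'; rewrite fz !inE eqxx orbT => /(_ isT) /andP [_ /reachbP] //.
case: Hz => Nr [Hr Hr'].
have [a [b [L1 [L2 [HL Ha Hab Hadj Hb]]]]] := reach_split Hr Nr.
have z'adj : adj H z' z by rewrite /adj setUC -fE'.
have badj : adj H b a by rewrite adjC.
rewrite fE' -Hab; apply/subsetP => t /set2P [] ->.
- apply: in_region.
  + apply: reach_sym; apply: reach_le Ha; lia.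
  + apply: reach_sym; apply: (@reach_le _ _ (L1 + 1)); first lia.
    by apply: reach_cat Ha _; apply: reach_adj.
- have Hz'a : reachP H (1 + L1) z' a by apply: reach_cat Ha; apply: reach_adj.
  apply: in_region.
  + apply: reach_sym; apply: reach_le Hz'a; lia.
  + apply: reach_sym; case: L2 HL Hb => [|L2] HL Hb.
      by move/reach0E: Hb => ->.
    apply: (@reach_le _ _ (1 + L1 + 1)); first lia.
    by apply: reach_cat Hz'a _; apply: reach_adj.
Qed.

Lemma extend_truss {T : finType} tau k (E F : {set {set T}}) :
  F \subset E -> truss_valid tau k F ->
  exists F', is_truss tau k E F' /\ F \subset F'.
Proof.
have: forall n (F : {set {set T}}), #|E| - #|F| <= n -> F \subset E ->
   truss_valid tau k F -> exists F', is_truss tau k E F' /\ F \subset F'.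
  elim=> [|n IH] G Hn HGE HG;
  (case: (classic (exists G' : {set {set T}}, [/\ G \subset G', G' \subset E, truss_valid tau k G' & G' <> G]));
   [move=> [G' [H1 H2 H3 H4]] | move=> Hno; exists G; split=> //; split=> //]).
  - have Hp : G \proper G' by rewrite properEneq H1 andbT eq_sym; apply/eqP.
    have := proper_card Hp; have := subset_leq_card H2; lia.
  - move=> G' H1 H2 H3; case: (eqVneq G' G) => // /eqP Hne; exfalso; apply: Hno.
    by exists G'; split.
  - have Hp : G \proper G' by rewrite properEneq H1 andbT eq_sym; apply/eqP.
    have := proper_card Hp; have := subset_leq_card H2 => h1 h2.
    have [F' [HF' HGF']] := IH G' ltac:(lia) H2 H3.
    by exists F'; split=> //; apply: subset_trans HGF'.
  - move=> G' H1 H2 H3; case: (eqVneq G' G) => // /eqP Hne; exfalso; apply: Hno.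
    by exists G'; split.
by move=> /(_ _ F (leqnn _)); apply.
Qed.

Definition pinv {T : finType} (E : {set {set T}}) tau (st : state T) : Prop :=
  [/\ st_H st \subset E,
      forall e, e \in E -> count (fun p => p.1 == e) (st_log st) = nat_of_bool (e \notin st_H st),
      forall f, f \in st_H st -> sup tau (st_H st) f <= st_s st f,
      forall p, p \in st_log st -> in_truss tau p.2 E p.1 /\
         (forall k' (F : {set {set T}}), F \subset E -> truss_valid tau k' F -> p.1 \in F -> k' <= p.2)
    & match st_k st with
      | None => (forall f, f \in st_H st -> st_s st f = sup tau (st_H st) f) /\
                (forall p, p \in st_log st -> forall g, g \in st_H st -> p.2 <= (st_s st g).+1)
      | Some k => [/\ 2 <= k, (forall f, f \in st_H st -> k - 2 < st_s st f ->
                                   st_s st f = sup tau (st_H st) f),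
                   (forall p, p \in st_log st -> p.2 <= k) &
                   exists Hk : {set {set T}}, [/\ Hk \subset E, truss_valid tau k Hk & st_H st \subset Hk]]
      end].

Lemma inv_step {T : finType} (E : {set {set T}}) tau st st' :
  (forall e, e \in E -> #|e| = 2) ->
  step tau st st' -> pinv E tau st -> pinv E tau st'.
Proof.
move=> E2; case.
-
  move=> H s log m HH [e0 e0H se0] Hmin [/= I1 I2 I3 I4 [I5 I6]]; split=> //=; split.
  + lia.
  + by move=> f fH _; apply: I5.
  + by move=> p pl; have := I6 p pl e0 e0H; lia.
  + exists H; split=> //; move=> f fH; rewrite -I5 //; have := Hmin f fH; lia.
-
  move=> H s log k e eH sek [/= I1 I2 I3 I4 [I5 I6 I7 [Hk [Hk1 Hk2 Hk3]]]].
  have HsubE : H :\ e \subset E by apply: subset_trans I1; apply: subsetDl.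
  split=> //=.
  + move=> e' e'E; rewrite -cats1 count_cat /= I2 // in_setD1.
    case: (eqVneq e' e) => [->|ne] /=; first by rewrite eH.
    by rewrite add0n addn0.
  + move=> f; rewrite in_setD1 => /andP [fe fH]; rewrite /reset.
    case: ifP => _ //.
    apply: leq_trans (I3 f fH); apply: sup_mono; exact: subsetDl.
  + move=> p; rewrite mem_rcons inE => /orP [/eqP -> /= | pl]; last exact: I4.
    split.
      have [F' [HF' HkF']] := extend_truss Hk1 Hk2.
      exists F'; split=> //; apply: (subsetP HkF'); exact: (subsetP Hk3).
    move=> k' F HFE HFv eF; rewrite leqNgt; apply/negP => Hlt.
    have FH : F \subset H.
      apply/subsetP => f fF; case: (boolP (f \in H)) => // fH; exfalso.
      have fE : f \in E by apply: (subsetP HFE).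
      have := I2 f fE; rewrite fH /= => Hc.
      have : has (fun p => p.1 == f) log by rewrite has_count Hc.
      case/hasP => q ql /eqP qf.
      have := (I4 q ql).2 k' F HFE HFv; rewrite qf => /(_ fF).
      have := I7 q ql; lia.
    have := HFv e eF; have := sup_mono tau e FH; have := I3 e eH; lia.
  + split=> //.
    * move=> f; rewrite in_setD1 => /andP [fe fH]; rewrite /reset.
      case: ifP => // Hc Hlt.
      have Nreg : ~~ (f \subset e :|: Delta tau H e).
        by apply: contraFN Hc => Hr; rewrite in_setD1 fe fH Hr Hlt.
      rewrite I6 // locality //; apply: E2; exact: (subsetP I1).
    * move=> p; rewrite mem_rcons inE => /orP [/eqP -> // | pl]; exact: I7.
    * exists Hk; split=> //; apply: subset_trans Hk3; exact: subsetDl.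
-
  move=> H s log k Hall [/= I1 I2 I3 I4 [I5 I6 I7 _]]; split=> //=; split.
  + by move=> f fH; apply: I6 => //; apply: Hall.
  + by move=> p pl g gH; have := I7 p pl; have := Hall g gH; lia.
Qed.

Lemma inv_steps {T : finType} (E : {set {set T}}) tau (st st' : state T) :
  (forall e, e \in E -> #|e| = 2) ->
  steps tau st st' -> pinv E tau st -> pinv E tau st'.
Proof. by move=> E2; elim=> // s1 s2 s3 Hs _ IH /(inv_step E2 Hs). Qed.

Theorem theorem1 (T : finType) (E : {set {set T}}) (tau : nat) :
  (forall e, e \in E -> #|e| = 2) -> 1 <= tau ->
  forall (s : {set T} -> nat) (log : seq ({set T} * nat)),
    steps tau (State E (sup tau E) [::] None) (State set0 s log None) ->
    forall e, e \in E ->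
      count (fun p => p.1 == e) log = 1 /\
      (forall k, (e, k) \in log -> is_truss_number tau E e k).
Proof.
move=> E2 _ s log Hs.
have I0 : pinv E tau (State E (sup tau E) [::] None).
  split=> //=; first by move=> e ->.
have [/= _ I2 _ I4 _] := inv_steps E2 Hs I0.
move=> e eE; split; first by rewrite I2 // inE.
move=> k ekl; have [Ht Hup] := I4 _ ekl; split=> // k' [F [[HFE HFv _] eF]].
exact: (Hup k' F HFE HFv eF).
Qed.
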